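(* Assume (A4) holds, and let $R^*:=\sup_{n\ge1}\sup\{|\boldsymbol\theta|_\infty:\boldsymbol\theta\in\operatorname{argmin}^*\widehat{\mathcal R}_{\ell,n}\}$. Then for all $n\ge1$ and $\lambda>0$ the set of minimizers of $\widehat{\mathcal R}_{\ell,\lambda}$ over $\mathcal P_{\mathbf a,\infty}$ is nonempty, and \[\sup_{\lambda\ge0,\,n\ge1}\Big\{|\boldsymbol\theta|_\infty:\boldsymbol\theta\in\operatorname{argmin}^*\widehat{\mathcal R}_{\ell,\lambda}\Big\}\le R^*\cdot P(\mathbf a)^{1/p}.\]
   Context: Setting: $d\in\mathbb N$, $\mathcal X=[0,1]^d$, $\mathcal Y=\{-1,1\}$; $\rho$ is a probability distribution on $\mathcal X\times\mathcal Y$, $(X,Y)\sim\rho$, $(x_i,y_i)_{i\ge1}$ i.i.d. from $\rho$. Networks: $\sigma(t)=\max\{0,t\}$; architecture $\mathbf a=(a_0,\dots,a_L)$ with $a_0=d$, $a_L=1$, $P(\mathbf a)=\sum_{l=1}^L(a_la_{l-1}+a_l)$; parametrization $\boldsymbol\theta=((W_l,B_l))_{l=1}^L$, $W_l\in\mathbb R^{a_l\times a_{l-1}}$, $B_l\in\mathbb R^{a_l}$, viewed as a vector in $\mathbb R^{P(\mathbf a)}$ with norms $|\cdot|_\infty$ (max absolute entry) and $|\boldsymbol\theta|_p^p=$ sum of $p$-th powers of absolute entries; $\mathcal P_{\mathbf a,\infty}$ is the set of all parametrizations. Realization $f(x;\boldsymbol\theta)=\operatorname{clip}_1(T_L\circ\sigma\circ\cdots\circ\sigma\circ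 T_1(x))$, $T_l(z)=W_lz+B_l$, $\operatorname{clip}_1(t)=\max(-1,\min(1,t))$. Fix $0<p<\infty$. $\widehat{\mathcal R}_{\ell,\lambda}(\boldsymbol\theta)=\frac1n\sum_{i=1}^n(f(x_i;\boldsymbol\theta)-y_i)^2+\frac\lambda2|\boldsymbol\theta|_p^p$, $\widehat{\mathcal R}_{\ell,n}=\widehat{\mathcal R}_{\ell,0}$; $\mathcal R_\ell(\boldsymbol\theta)=\mathbb E[(f(X;\boldsymbol\theta)-Y)^2]$. For $\lambda\ge0$, $\operatorname{argmin}^*\widehat{\mathcal R}_{\ell,\lambda}$ is the set of minimizers of $|\boldsymbol\theta|_\infty$ among the minimizers of $\widehat{\mathcal R}_{\ell,\lambda}$ over $\mathcal P_{\mathbf a,\infty}$ (in particular $\operatorname{argmin}^*\widehat{\mathcal R}_{\ell,n}$ for $\lambda=0$). Assumption (A4): the argmins of $\mathcal R_\ell$ and $\widehat{\mathcal R}_{\ell,n}$ are nonempty, and almost surely over the i.i.d. draws, $\sup_{n\ge1}\sup\{|\boldsymbol\theta|_\infty:\boldsymbol\theta\in\operatorname{argmin}^*\widehat{\mathcal R}_{\ell,n}\}<\infty$. *)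

(* Defs.v *)
From HB Require Import structures.
From mathcomp Require Import all_boot all_order all_algebra.
From mathcomp Require Import all_classical all_reals all_analysis.
Set Implicit Arguments. Unset Strict Implicit. Unset Printing Implicit Defensive.
Import Order.TTheory GRing.Theory Num.Theory.
Local Open Scope ring_scope.
Local Open Scope classical_set_scope.

Section Network.
Variable R : realType.

(* Architecture a = (a_0, ..., a_L) encoded as the list [:: a_0; ...; a_L]. *)
Definition depth (a : seq nat) : nat := (size a).-1.
Definition arch_ok (d : nat) (a : seq nat) : bool :=
  [&& 2 <= size a, nth 0 a 0 == d & nth 0 a (depth a) == 1]%N.

Definition nparams (a : seq nat) : nat :=
  (\sum_(1 <= l < size a) (nth 0 a l * nth 0 a l.-1 + nth 0 a l))%N.

(* Number of parameters of layers 1..l-1: offset of layer l in the flat vector. *)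
Definition offset (a : seq nat) (l : nat) : nat :=
  (\sum_(1 <= k < l) (nth 0 a k * nth 0 a k.-1 + nth 0 a k))%N.

Definition param (a : seq nat) := 'rV[R]_(nparams a).

(* k-th entry (0-based) of a row vector, 0 if out of range. *)
Definition vget (n : nat) (v : 'rV[R]_n) (k : nat) : R :=
  \sum_(i < n | val i == k) v 0 i.

(* Flattening convention: layer l occupies positions offset a l + [0, a_l a_{l-1} + a_l);
   first W_l in row-major order, then B_l.  (i, j are 0-based.) *)
Definition Wt a (th : param a) (l i j : nat) : R :=
  vget th (offset a l + i * nth 0 a l.-1 + j).
Definition Bs a (th : param a) (l i : nat) : R :=
  vget th (offset a l + nth 0 a l * nth 0 a l.-1 + i).

Definition relu (t : R) : R := Num.max 0 t.
Definition clip1 (t : R) : R := Num.max (-1) (Num.min 1 t).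

(* hid a th x l = sigma o T_l o ... o sigma o T_1 (x)  (hid 0 = x), as nat-indexed vector *)
Fixpoint hid (d : nat) a (th : param a) (x : 'rV[R]_d) (l : nat) : nat -> R :=
  match l with
  | 0 => fun j => vget x j
  | l'.+1 => fun i =>
      relu (\sum_(j < nth 0 a l') Wt th l'.+1 i j * hid th x l' j + Bs th l'.+1 i)
  end.

Definition realization (d : nat) a (th : param a) (x : 'rV[R]_d) : R :=
  let L := depth a in
  clip1 (\sum_(j < nth 0 a L.-1) Wt th L 0 j * hid th x L.-1 j + Bs th L 0).

Definition norm_inf a (th : param a) : R := \big[Num.max/0]_(i < nparams a) `|th 0 i|.
Definition norm_pp a (p : R) (th : param a) : R := \sum_(i < nparams a) (`|th 0 i| `^ p).

(* Regularized empirical risk with the first n samples (xs 0, ys 0), ..., (xs n-1, ys n-1)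
   (these are (x_1,y_1),...,(x_n,y_n) of the paper). *)
Definition emp_risk (d : nat) a (p : R) (xs : nat -> 'rV[R]_d) (ys : nat -> R)
    (n : nat) (lam : R) (th : param a) : R :=
  n%:R^-1 * (\sum_(i < n) (realization th (xs i) - ys i) ^+ 2) + lam / 2 * norm_pp p th.

Definition argmin (T : Type) (F : T -> R) : set T := [set t | forall t', F t <= F t'].

Definition argmin_star a (F : param a -> R) : set (param a) :=
  [set th | argmin F th /\ forall th', argmin F th' -> norm_inf th <= norm_inf th'].

End Network.

(* Main.v *)
Require Import Defs.
From HB Require Import structures.
From mathcomp Require Import all_boot all_order all_algebra.
From mathcomp Require Import all_classical all_reals all_analysis.
From mathcomp Require Import ring.
Import Order.TTheory GRing.Theory Num.Theory.
Local Open Scope ring_scope.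
Local Open Scope classical_set_scope.

Module Helpers.
Import numFieldNormedType.Exports.


Section C.
Variable R : realType.
Variable T : topologicalType.

Lemma cD (f g : T -> R) : continuous f -> continuous g -> continuous (fun x => f x + g x).
Proof. by move=> cf cg x; apply: cvgD; [exact: cf|exact: cg]. Qed.

Lemma cM (f g : T -> R) : continuous f -> continuous g -> continuous (fun x => f x * g x).
Proof. by move=> cf cg x; apply: cvgM; [exact: cf|exact: cg]. Qed.

Lemma cC (c : R) : continuous (fun _ : T => c).
Proof. by move=> x; apply: cst_continuous. Qed.

Lemma cmax (f g : T -> R) : continuous f -> continuous g -> continuous (fun x => Num.max (f x) (g x)).
Proof. by move=> cf cg x; have := (@continuous_max R T f g x (cf x) (cg x)). Qed.

Lemma cmin (f g : T -> R) : continuous f -> continuous g -> continuous (fun x => Num.min (f x) (g x)).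
Proof. by move=> cf cg x; have := (@continuous_min R T f g x (cf x) (cg x)). Qed.

Lemma csum (I : Type) (r : seq I) (P : pred I) (F : I -> T -> R) :
  (forall i, continuous (F i)) -> continuous (fun x => \sum_(i <- r | P i) F i x).
Proof.
move=> cF; elim: r => [|i r IH].
  by rewrite (_ : (fun x => _) = fun _ => 0); [exact: cC|apply/funext=> x; rewrite big_nil].
rewrite (_ : (fun x => _) = fun x => (if P i then F i x else 0) + \sum_(j <- r | P j) F j x).
  by apply: cD => //; case: (P i) => //; exact: cC.
by apply/funext=> x; rewrite big_cons; case: (P i); rewrite ?add0r.
Qed.

Lemma ccomp (f : T -> R) (g : R -> R) : continuous f -> continuous g -> continuous (fun x => g (f x)).
Proof. by move=> cf cg x; apply: (continuous_comp (cf x) (cg (f x))). Qed.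

End C.

Lemma cpow (R : realType) (p : R) : 0 < p -> continuous (fun x : R => `|x| `^ p).
Proof.
move=> p0 x.
have [->|x0] := eqVneq x 0.
  apply/cvgrPdist_lt => e e0 /=.
  rewrite normr0 powR0 ?gt_eqF //.
  have d0 : 0 < e `^ p^-1 by apply: powR_gt0.
  near=> y.
  rewrite sub0r normrN ger0_norm ?powR_ge0 //.
  have : `|y| < e `^ p^-1.
    near: y. exists (e `^ p^-1) => //= z. rewrite /ball_ /= sub0r normrN. done.
  move=> /(gt0_ltr_powR p0) => H.
  rewrite -[e in _ < e](@powRr1 _ e) ?(ltW e0) // -(@mulVf _ p) ?gt_eqF // powRrM.
  by apply: H; rewrite nnegrE ?powR_ge0.
have nx : 0 < `|x| by rewrite normr_gt0.
have hg : {for x, continuous (fun y => expR (p * ln `|y|))}.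
  apply: (@continuous_comp _ _ _ (fun y => p * ln `|y|) expR x); last exact: continuous_expR.
  apply: continuousM; first exact: cvg_cst.
  exact: (continuous_comp (@norm_continuous _ R^o x) (continuous_ln nx)).
have E : `|x| `^ p = expR (p * ln `|x|) by rewrite /powR gt_eqF.
rewrite /continuous_at E.
apply: cvg_trans hg; apply: near_eq_cvg.
near=> y; rewrite /powR gt_eqF //.
near: y.
exists `|x| => //= z; rewrite /ball_ /= => xz.
rewrite normr_gt0; apply/eqP => z0; move: xz; rewrite z0 subr0 ltxx //.
Unshelve. all: by end_near.
Qed.

Section Net.
Variable R : realType.

Lemma cbigmax (T : topologicalType) (I : Type) (r : seq I) (P : pred I) (F : I -> T -> R) :
  (forall i, continuous (F i)) -> continuous (fun x => \big[Num.max/0]_(i <- r | P i) F i x).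
Proof.
move=> cF; elim: r => [|i r IH].
  by rewrite (_ : (fun x => _) = fun _ => 0); [exact: cC|apply/funext=> x; rewrite big_nil].
case Pi: (P i).
  rewrite (_ : (fun x => _) = fun x => Num.max (F i x) (\big[Num.max/0]_(j <- r | P j) F j x)).
    exact: cmax.
  by apply/funext=> x; rewrite big_cons Pi.
rewrite (_ : (fun x => _) = fun x => (\big[Num.max/0]_(j <- r | P j) F j x)) //.
by apply/funext=> x; rewrite big_cons Pi.
Qed.

Lemma c_coord N (i : 'I_N) : continuous (fun th : 'rV[R]_N => th 0 i).
Proof. exact: coord_continuous. Qed.

Lemma c_vget N k : continuous (fun th : 'rV[R]_N => vget th k).
Proof. by apply: csum => i; exact: c_coord. Qed.

Variables (d : nat) (a : seq nat) (x : 'rV[R]_d).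

Lemma c_hid l : forall i, continuous (fun th : param R a => hid th x l i).
Proof.
elim: l => [|l IH] i /=; first exact: cC.
apply: (@ccomp _ _ _ (@relu R)); last by apply: cmax; [exact: cC| move=> y; exact: cvg_id].
apply: cD; last exact: c_vget.
apply: csum => j; apply: cM; [exact: c_vget|exact: IH].
Qed.

Lemma c_real : continuous (fun th : param R a => realization th x).
Proof.
apply: (@ccomp _ _ _ (@clip1 R)).
  apply: cD; last exact: c_vget.
  apply: csum => j; apply: cM; [exact: c_vget|exact: c_hid].
apply: cmax; first exact: cC.
by apply: cmin; [exact: cC| move=> y; exact: cvg_id].
Qed.

End Net.

Lemma c_emp (R : realType) d a (p : R) xs ys n lam : 0 < p ->
  continuous (@emp_risk R d a p xs ys n lam).
Proof.
move=> p0; apply: cD; apply: cM; try exact: cC.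
  apply: csum => i; rewrite /GRing.exp /=.
  have h : continuous (fun th : param R a => realization th (xs i) - ys i).
    by apply: cD; [exact: c_real|exact: cC].
  by apply: cM => //; apply: cM => //; exact: cC.
apply: csum => i; apply: (@ccomp _ _ _ (fun t : R => `|t| `^ p)); [exact: c_coord|exact: cpow].
Qed.

Lemma c_ninf (R : realType) a : continuous (@norm_inf R a).
Proof.
apply: cbigmax => i; apply: (@ccomp _ _ _ (fun t : R => `|t|)); first exact: c_coord.
move=> y; exact: (@norm_continuous _ R^o y).
Qed.

Section Main.
Variable R : realType.

Lemma min_on N (F : 'rV[R]_N -> R) (K : set 'rV[R]_N) :
  K !=set0 -> compact K -> continuous F -> exists2 c, K c & forall t, K t -> F c <= F t.
Proof.
move=> K0 cK cF; have [c cK' h] := EVT_min_rV K0 cK (continuous_subspaceT cF).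
exists c; first by rewrite inE in cK'.
by move=> t Kt; apply: h; rewrite inE.
Qed.

Definition box N (M : R) := [set v : 'rV[R]_N | forall i, `|v 0 i| <= M].

Lemma box_compact N M : compact (box N M).
Proof.
rewrite (_ : box N M = [set v | forall i, (`[-M, M]%classic : set R) (v ord0 i)]).
  exact: (@rV_compact R N (fun=> `[-M, M]%classic) (fun=> @segment_compact R (-M) M)).
apply/seteqP; split => v /= h i; move: (h i); by rewrite /= in_itv /= ler_norml.
Qed.

Lemma ninf_box a (th : param R a) M : 0 <= M -> (norm_inf th <= M <-> box _ M th).
Proof.
move=> M0; split.
  move=> h i; apply: le_trans h; rewrite /norm_inf.
  exact: (le_bigmax _ (fun i => `|th 0 i|) i).
by move=> h; rewrite /norm_inf; apply: bigmax_le => // i _; exact: h.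
Qed.

Lemma ninf_ge0 a (th : param R a) : 0 <= norm_inf th.
Proof. by rewrite /norm_inf; elim/big_ind: _ => // x y hx hy; rewrite le_max hx. Qed.

Lemma pp_ge0 a (p : R) (th : param R a) : 0 <= norm_pp p th.
Proof. by apply: sumr_ge0 => i _; exact: powR_ge0. Qed.

Lemma pp_ge_term a (p : R) (th : param R a) i : `|th 0 i| `^ p <= norm_pp p th.
Proof.
rewrite /norm_pp (bigD1 i) //= lerDl; apply: sumr_ge0 => j _; exact: powR_ge0.
Qed.

Lemma emp_split d a (p : R) xs ys n lam (th : param R a) :
  @emp_risk R d a p xs ys n lam th = emp_risk p xs ys n 0 th + lam / 2 * norm_pp p th.
Proof. by rewrite /emp_risk mul0r mul0r addr0. Qed.

Lemma emp0_ge0 d a (p : R) xs ys n (th : param R a) : 0 <= @emp_risk R d a p xs ys n 0 th.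
Proof.
rewrite /emp_risk mul0r mul0r addr0; apply: mulr_ge0; first by rewrite invr_ge0.
by apply: sumr_ge0 => i _; exact: sqr_ge0.
Qed.

End Main.
Arguments box {R} N M.
Arguments box_compact {R} N M.
Arguments pp_ge_term {R a p} th i.
Arguments min_on {R N} F K.
Arguments ninf_box {R a} th M.
Arguments ninf_ge0 {R a} th.

Section Main2.
Variables (R : realType) (d : nat) (a : seq nat) (p : R) (xs : nat -> 'rV[R]_d) (ys : nat -> R).
Hypothesis p0 : 0 < p.

Lemma powRK (x : R) : 0 <= x -> (x `^ p^-1) `^ p = x.
Proof. by move=> x0; rewrite -powRrM mulVf ?gt_eqF // powRr1. Qed.

Lemma powRK' (x : R) : 0 <= x -> (x `^ p) `^ p^-1 = x.
Proof. by move=> x0; rewrite -powRrM mulfV ?gt_eqF // powRr1. Qed.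

Lemma exists_lam n lam : 0 < lam -> exists th : param R a, argmin (emp_risk p xs ys n lam) th.
Proof.
move=> l0; set F := emp_risk p xs ys n lam.
set V := F 0.
have V0 : 0 <= V by rewrite /V /F emp_split; apply: addr_ge0; [exact: emp0_ge0|apply: mulr_ge0; [apply: divr_ge0 => //; exact: ltW|exact: pp_ge0]].
have W0 : 0 <= 2 * V / lam by apply: divr_ge0; [apply: mulr_ge0|exact: ltW].
set M := (2 * V / lam) `^ p^-1.
have M0 : 0 <= M by exact: powR_ge0.
have b0 : box (nparams a) M 0 by move=> i; rewrite mxE normr0.
have [c cK h] := min_on F (box _ M) (ex_intro _ 0 b0) (box_compact _ _) (@c_emp R d a p xs ys n lam p0).
exists c => t.
have [tK|tK] := pselect (box _ M t); first exact: h.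
have [i ti] : exists i, M < `|t 0 i|.
  apply: contra_notP tK => H i; rewrite leNgt; apply/negP => hi; apply: H; by exists i.
apply: (le_trans (h 0 b0)).
rewrite -/V /F emp_split.
have -> : V = lam / 2 * M `^ p.
  rewrite /M powRK //; field; exact: lt0r_neq0.
apply: ler_wpDl; first exact: emp0_ge0.
apply: ler_wpM2l; first by apply: divr_ge0 => //; exact: ltW.
apply: le_trans (pp_ge_term t i).
by apply: ge0_ler_powR; rewrite ?nnegrE ?(ltW p0) ?(ltW ti).
Qed.


Lemma exists_star n (th0 : param R a) : argmin (emp_risk p xs ys n 0) th0 ->
  exists th : param R a, argmin_star (emp_risk p xs ys n 0) th.
Proof.
move=> h0; set F := emp_risk p xs ys n 0.
have cF : continuous F by exact: (@c_emp R d a p xs ys n 0 p0).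
set K := box (nparams a) (norm_inf th0) `&` [set t | F t <= F th0].
have cK : compact K.
  apply: compact_closedI; first exact: box_compact.
  apply: (@preimage_closed _ _ F [set x | x <= F th0]); last exact: closed_le.
  by move=> y _; exact: cF.
have K0 : K th0.
  split; last exact: lexx.
  have := (ninf_box th0 (norm_inf th0) (ninf_ge0 th0)).1.
  move=> H; apply: H; exact: le_refl.
have [c [cb cS] h] := min_on (@norm_inf R a) K (ex_intro _ th0 K0) cK (@c_ninf R a).
exists c; split.
  by move=> t; apply: le_trans cS _; exact: h0.
move=> t ht.
have [tK|tK] := pselect (box (nparams a) (norm_inf th0) t).
  by apply: h; split => //; exact: ht.
apply: le_trans (h _ K0) _.
rewrite leNgt; apply/negP => H; apply: tK; apply/(ninf_box _ _ (ninf_ge0 th0)).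
exact: ltW.
Qed.

End Main2.



Section Main3.
Variables (R : realType) (d : nat) (a : seq nat) (p : R) (xs : nat -> 'rV[R]_d) (ys : nat -> R).
Hypothesis p0 : 0 < p.

Lemma bound_lam n lam (th ths : param R a) : 0 < lam ->
  argmin (emp_risk p xs ys n lam) th -> argmin (emp_risk p xs ys n 0) ths ->
  norm_inf th <= (nparams a)%:R `^ p^-1 * norm_inf ths.
Proof.
move=> l0 hth hths.
have hpp : norm_pp p th <= norm_pp p ths.
  have := hth ths; rewrite (emp_split _ _ _ _ _ _ _ lam th) (emp_split _ _ _ _ _ _ _ lam ths) => H.
  have := hths th => H2.
  have l2 : 0 < lam / 2 by apply: divr_gt0.
  rewrite -(ler_pM2l l2) -(lerD2l (emp_risk p xs ys n 0 th)).
  by apply: le_trans H _; rewrite lerD2r.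
set m := norm_inf ths.
have m0 : 0 <= m by exact: ninf_ge0.
have hb : norm_pp p ths <= (nparams a)%:R * m `^ p.
  have hi : forall i : 'I_(nparams a), `|ths 0 i| `^ p <= m `^ p.
    move=> i; apply: ge0_ler_powR; rewrite ?nnegrE ?normr_ge0 ?(ltW p0) //.
    by move: i; apply/(ninf_box ths _ m0).
  rewrite /norm_pp; apply: le_trans (ler_sum _ (fun i _ => hi i)) _.
  by rewrite sumr_const card_ord mulr_natl.
have c0 : 0 <= (nparams a)%:R `^ p^-1 * m by apply: mulr_ge0 => //; exact: powR_ge0.
apply/(ninf_box _ _ c0) => i.
have : `|th 0 i| `^ p <= (nparams a)%:R * m `^ p.
  by apply: le_trans (pp_ge_term th i) _; apply: le_trans hpp hb.
move=> H.
have nn1 : `|th 0 i| `^ p \in Num.nneg by rewrite nnegrE powR_ge0.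
have nn2 : (nparams a)%:R * m `^ p \in Num.nneg by rewrite nnegrE mulr_ge0 ?powR_ge0.
have pi0 : 0 <= p^-1 by rewrite invr_ge0 ltW.
have := ge0_ler_powR pi0 nn1 nn2 H.
by rewrite (@powRK' R p p0 _ (normr_ge0 _)) powRM ?powR_ge0 // (@powRK' R p p0 _ m0).
Qed.
End Main3.

End Helpers.
Import Helpers.


Lemma npos d a : arch_ok d a -> (0 < nparams a)%N.
Proof.
move=> /and3P[hs _ /eqP hL].
have hL1 : (1 <= depth a)%N by rewrite /depth; case: (size a) hs => [|[|k]].
have -> : nparams a = (\sum_(1 <= l < (depth a).+1) (nth 0 a l * nth 0 a l.-1 + nth 0 a l))%N.
  by rewrite /nparams /depth prednK // (ltn_trans _ hs).
by rewrite big_nat_recr //= hL addn1 addnS.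
Qed.

Theorem lemma2 (R : realType) (d : nat) (a : seq nat) (p : R)
    (xs : nat -> 'rV[R]_d) (ys : nat -> R) :
  arch_ok d a -> 0 < p ->
  (forall i (j : 'I_d), 0 <= xs i 0 j <= 1) ->
  (forall i, ys i = 1 \/ ys i = -1) ->
  (* (A4), pathwise: the empirical argmins are nonempty ... *)
  (forall n : nat, (1 <= n)%N ->
     exists th : param R a, argmin (emp_risk p xs ys n 0) th) ->
  (* ... and R^* = sup_n sup { |th|_inf : th in argmin^* R_n } is finite *)
  (exists B : R, forall (n : nat) (th : param R a), (1 <= n)%N ->
     argmin_star (emp_risk p xs ys n 0) th -> norm_inf th <= B) ->
  let Rstar := ereal_sup [set r | exists (n : nat) (th : param R a),
        [/\ (1 <= n)%N, argmin_star (emp_risk p xs ys n 0) th & r = (norm_inf th)%:E]] in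
  (forall (n : nat) (lam : R), (1 <= n)%N -> 0 < lam ->
     exists th : param R a, argmin (emp_risk p xs ys n lam) th) /\
  (ereal_sup [set r | exists (n : nat) (lam : R) (th : param R a),
        [/\ (1 <= n)%N, (0 <= lam)%R, argmin_star (emp_risk p xs ys n lam) th
          & r = (norm_inf th)%:E]]
   <= Rstar * ((nparams a)%:R `^ p^-1)%:E)%E.
Proof.
move=> hA p0 _ _ hmin _ Rstar.
split.
  by move=> n lam _ l0; exact: exists_lam.
set c := (nparams a)%:R `^ p^-1.
have c1 : 1 <= c.
  rewrite /c -{1}(powRr0 (nparams a)%:R); apply: (@ler_powR R _ _ 0 p^-1).
    by rewrite ler1n; exact: npos hA.
  by rewrite invr_ge0 ltW.
have c0 : (0 <= c%:E)%E by rewrite lee_fin (le_trans ler01 c1).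
apply: ge_ereal_sup => r [n [lam [th [n1 l0 hst ->]]]].
have [th0 h0] := hmin n n1.
have [ths hs] := @exists_star R d a p xs ys p0 n th0 h0.
have Rs : ((norm_inf ths)%:E <= Rstar)%E.
  by apply: ereal_sup_ubound; exists n, ths; split.
have [l00|l0'] : lam = 0 \/ 0 < lam.
  by rewrite lt_neqAle eq_sym l0 andbT; case: eqP => /=; [left|right].
  subst lam.
  have Rt : ((norm_inf th)%:E <= Rstar)%E.
    by apply: ereal_sup_ubound; exists n, th; split.
  apply: (@le_trans _ _ ((norm_inf th)%:E * c%:E)%E).
    by rewrite -EFinM lee_fin ler_peMr // ninf_ge0.
  exact: lee_wpmul2r.
apply: (@le_trans _ _ ((norm_inf ths)%:E * c%:E)%E); last exact: lee_wpmul2r.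
rewrite -EFinM lee_fin mulrC.
exact: (@bound_lam R d a p xs ys p0 n lam th ths l0' hst.1 hs.1).
Qed.
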